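(* Let $s\ge2$ and let $G$ be a $K_{2,s}$-free graph. Then $G$ is strongly $d$-degenerate, where \[d=d(G):=\left\lfloor(2\widetilde{\nabla}_0(G)-2)(s-1)\widetilde{\nabla}_{1/2}(G)+2\widetilde{\nabla}_0(G)\right\rfloor<2s\,\widetilde{\nabla}_0(G)\,\widetilde{\nabla}_{1/2}(G)\le 2s\,\widetilde{\nabla}_{1/2}(G)^2.\]
   Context: A graph $H$ is a shallow topological minor of $G$ at depth $a$ ($a\ge0$ a half-integer) if $G$ contains as a subgraph a subdivision of $H$ in which every edge of $H$ is replaced by a path of length at most $2a+1$ (internally vertex-disjoint). $\widetilde{\nabla}_a(G)$ is the maximum of $e(H)/v(H)$ over all non-empty shallow topological minors $H$ of $G$ at depth $a$. A graph is $K_{2,s}$-free if it has no subgraph isomorphic to $K_{2,s}$. For an integer $d\ge1$, a vertex $v$ of $G$ is $d$-removable in $G$ if $d_G(v)\le d$ and at most one neighbour $w$ of $v$ has $d_G(w)>d$; $G$ is strongly $d$-degenerate if every non-empty subgraph $G'$ of $G$ contains a vertex $d$-removable in $G'$. *)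

(* Defs.v *)
From mathcomp Require Import all_boot all_order all_algebra.
Set Implicit Arguments. Unset Strict Implicit. Unset Printing Implicit Defensive.
Import Order.TTheory GRing.Theory Num.Theory.

Definition simple_graph (T : finType) (e : rel T) : Prop :=
  irreflexive e /\ symmetric e.

(* e(H)/v(H) for a finite simple graph H = (U, eH); the edge count is half
   the number of ordered adjacent pairs. *)
Definition density (U : finType) (eH : rel U) : rat :=
  ((#|[set p : U * U | eH p.1 p.2]|)%:R / (2 * #|U|)%:R)%R.

(* H = (U, eH) is a shallow topological minor of G = (T, e) at depth k/2
   (k : nat, so every half-integer depth a >= 0 is a = k/2): there is an
   injective map phi of the vertices of H to (branch) vertices of G and, for
   every edge uv of H, a path of G from phi u to phi v whose sequence of
   internal vertices is P u v; every such path has length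
   size (P u v) + 1 <= 2a+1 = k+1, is a genuine path (no repeated vertex),
   its internal vertices are not branch vertices, and paths of distinct
   edges of H are internally vertex-disjoint. *)
Definition shallow_top_minor (k : nat) (T : finType) (e : rel T)
    (U : finType) (eH : rel U) : Prop :=
  exists (phi : U -> T) (P : U -> U -> seq T),
    [/\ injective phi,
        (forall u v, eH u v -> P v u = rev (P u v)),
        (forall u v, eH u v ->
           [/\ path e (phi u) (rcons (P u v) (phi v)),
               uniq (phi u :: rcons (P u v) (phi v)),
               size (P u v) <= k &
               (forall x w, x \in P u v -> x != phi w)]) &
        (forall u v u' v' x, eH u v -> eH u' v' ->
           x \in P u v -> x \in P u' v' ->
           (u = u' /\ v = v') \/ (u = v' /\ v = u'))].

(* t = \widetilde{\nabla}_{k/2}(G): t is the maximum of e(H)/v(H) over all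
   non-empty shallow topological minors H of G at depth k/2 (attained, and
   an upper bound). *)
Definition tnabla_is (k : nat) (T : finType) (e : rel T) (t : rat) : Prop :=
  (exists (U : finType) (eH : rel U),
     [/\ simple_graph eH, (0 < #|U|)%N, shallow_top_minor k e eH &
         density eH = t]) /\
  (forall (U : finType) (eH : rel U),
     simple_graph eH -> (0 < #|U|)%N -> shallow_top_minor k e eH ->
     (density eH <= t)%R).

Definition has_K2s (s : nat) (T : finType) (e : rel T) : Prop :=
  exists (a b : T) (C : {set T}),
    [/\ a != b, #|C| = s, a \notin C, b \notin C &
        forall c, c \in C -> e a c && e b c].

Definition K2s_free (s : nat) (T : finType) (e : rel T) : Prop :=
  ~ has_K2s s e.

Definition subgraph (T : finType) (e : rel T) (S : {set T}) (E' : rel T)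
  : Prop :=
  symmetric E' /\
  (forall x y, E' x y -> [/\ x \in S, y \in S & e x y]).

Definition deg (T : finType) (S : {set T}) (E' : rel T) (x : T) : nat :=
  #|[set y in S | E' x y]|.

Definition removable (d : int) (T : finType) (S : {set T}) (E' : rel T)
    (v : T) : bool :=
  [&& v \in S, ((deg S E' v)%:Z <= d)%R &
      (#|[set w in S | E' v w & (d < (deg S E' w)%:Z)%R]| <= 1)%N].

Definition strongly_degenerate (d : int) (T : finType) (e : rel T) : Prop :=
  forall (S : {set T}) (E' : rel T), subgraph e S E' -> S != set0 ->
    exists v, removable d S E' v.

(* Main.v *)
Require Import Defs.
From mathcomp Require Import all_boot all_order all_algebra.
From mathcomp Require Import lra zify.
Import Order.TTheory GRing.Theory Num.Theory.
Set Implicit Arguments. Unset Strict Implicit. Unset Printing Implicit Defensive.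

Lemma density_le k (T : finType) (e : rel T) t (U : finType) (eH : rel U) :
  tnabla_is k e t -> simple_graph eH -> (0 < #|U|)%N -> shallow_top_minor k e eH ->
  ((#|[set p : U * U | eH p.1 p.2]|)%:R <= t * (2 * #|U|)%:R :> rat)%R.
Proof.
move=> [_ H] sH U0 M; have := H U eH sH U0 M.
rewrite /density ler_pdivrMr // ltr0n; lia.
Qed.

Lemma card_pairs (T : finType) (P : T -> T -> bool) :
  #|[set p : T * T | P p.1 p.2]| = \sum_x #|[set y | P x y]|.
Proof.
rewrite -sum1_card big_mkcond /=.
rewrite (eq_bigr (fun p : T * T => (P p.1 p.2 : nat))); last first.
  by move=> p _; rewrite inE; case: (P _ _).
rewrite -(pair_big xpredT xpredT (fun x y => (P x y : nat))) /=.
apply: congr_big => // x _; symmetry; rewrite -sum1_card big_mkcond /=.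
by apply: eq_bigr => y _; rewrite inE; case: (P _ _).
Qed.

Lemma pairs_sig (T : finType) (W : {set T}) (R : rel T) :
  (#|[set p : T * T | [&& p.1 \in W, p.2 \in W & R p.1 p.2]]| <=
   #|[set p : {x | x \in W} * {x | x \in W} | R (val p.1) (val p.2)]|)%N.
Proof.
set A := [set p : {x | x \in W} * {x | x \in W} | _].
apply: (leq_trans _ (leq_imset_card (fun p : {x | x \in W} * {x | x \in W} => (val p.1, val p.2)) A)).
apply: subset_leq_card; apply/subsetP => [[x y]]; rewrite inE /= => /and3P [hx hy hr].
apply/imsetP; exists (exist _ x hx, exist _ y hy) => //.
by rewrite inE.
Qed.

Lemma sub_card (T : finType) n (A : {set T}) : (n <= #|A|)%N ->
  exists C : {set T}, C \subset A /\ #|C| = n.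
Proof.
elim: n => [|n IH] h; first by exists set0; rewrite sub0set cards0.
have [C [sCA cC]] := IH (ltnW h).
have : C \proper A by rewrite properEcard sCA cC.
case/properP => _ [x xA xC]; exists (x |: C); split.
  by rewrite subUset sub1set xA.
by rewrite cardsU1 xC cC.
Qed.
Lemma minor_mono k k' (T : finType) (e : rel T) (U : finType) (eH : rel U) :
  (k <= k')%N -> shallow_top_minor k e eH -> shallow_top_minor k' e eH.
Proof.
move=> kk [phi [P [h1 h2 h3 h4]]]; exists phi, P; split => // u v /h3 [a b c f].
by split => //; apply: leq_trans kk.
Qed.

Lemma arith0 (s : nat) (T : finType) (e : rel T) (t0 t1 : rat) (d : int) :
  (2 <= s)%N -> 
  tnabla_is 0 e t0 -> tnabla_is 1 e t1 ->
  d = Num.floor (((2 * t0 - 2) * (s.-1)%:R * t1 + 2 * t0)%R) ->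
  (1 <= d)%R ->
  [/\ (t0 <= t1)%R, (0 < t0)%R,
      (d%:~R < 2 * s%:R * t0 * t1)%R &
      (2 * s%:R * t0 * t1 <= 2 * s%:R * t1 ^+ 2)%R].
Proof.
move=> s2 T0 T1 hd d1.
have t01 : (t0 <= t1)%R.
  case: T0 => [[U [eH [sH pU M dH]]] _]; rewrite -dH.
  by apply: T1.2 sH pU _; apply: minor_mono M.
have t0ge : (0 <= t0)%R.
  by case: T0 => [[U [eH [sH pU M dH]]] _]; rewrite -dH /density divr_ge0.
have fl1 : (d%:~R <= ((2 * t0 - 2) * (s.-1)%:R * t1 + 2 * t0))%R.
  by rewrite hd floor_le.
have S1 : ((1 : rat) <= (s.-1)%:R)%R by rewrite ler1n; lia.
have d1' : ((1:rat) <= d%:~R)%R by rewrite ler1z.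
have sE : (s%:R = (s.-1)%:R + 1 :> rat)%R by rewrite natr1 prednK //; lia.
have t0pos : (0 < t0)%R.
  rewrite lt_neqAle t0ge andbT; apply/negP => /eqP t00; subst t0.
  have : ((0:rat) <= (s.-1)%:R * t1)%R by apply: mulr_ge0; lra.
  lra.
split => //.
  rewrite sE.
  have : (0 < t0 * t1)%R by apply: mulr_gt0; lra.
  have : (t0 <= (s.-1)%:R * t1)%R.
    have : (t1 <= (s.-1)%:R * t1)%R by rewrite ler_peMl //; lra.
    lra.
  nra.
rewrite expr2 mulrA; apply: ler_wpM2r; first lra.
apply: ler_wpM2l => //; apply: mulr_ge0 => //; lra.
Qed.

Lemma sum_ind (T : finType) (A : {set T}) c :
  (\sum_x ((x \in A) * c) = #|A| * c)%N.
Proof.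
rewrite -sum_nat_const [in RHS]big_mkcond; apply: congr_big => // x _.
by case: (x \in A); rewrite ?mul1n ?mul0n.
Qed.

Local Open Scope ring_scope.
Lemma final_arith (t0 t1 nb ns na D S1 : rat) : ( 1 <= nb -> 1 <= D -> 0 <= ns -> 0 <= na ->
  1 <= S1 -> 0 <= t0 -> t0 <= t1 ->
  nb*(D+1) + ns*2 <= t0*(2*(nb+ns)) -> 2*na <= t1*(2*nb) -> ns <= na*S1 ->
  (2*t0-2)*S1*t1 + 2*t0 < D+1 -> False)%R.
Proof.
move=> nb1 D1 ns0 na0 S11 t00 t01 h0 h1 h2 fl.
have h3 : ns <= S1 * t1 * nb.
  have : na * S1 <= t1 * nb * S1 by apply: ler_wpM2r; lra.
  lra.
have p2 : 0 < ((D + 1 - ((2*t0-2)*S1*t1 + 2*t0)) * nb)%R by apply: mulr_gt0; lra.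
case: (lerP 1 t0) => ht.
  have p1 : 0 <= (t0 - 1) * (S1 * t1 * nb - ns) by apply: mulr_ge0; lra.
  nra.
have p1 : 0 <= (1 - t0) * ns by apply: mulr_ge0; lra.
have p3 : 0 <= (D - 1) * nb by apply: mulr_ge0; lra.
have p4 : 0 < (1 - t0) * nb by apply: mulr_gt0; lra.
nra.
Qed.

Local Close Scope ring_scope.

Lemma degen (s : nat) (T : finType) (e : rel T) (t0 t1 : rat) (dn : nat) :
  (2 <= s)%N -> simple_graph e -> K2s_free s e ->
  tnabla_is 0 e t0 -> tnabla_is 1 e t1 -> (0 <= t0)%R -> (t0 <= t1)%R ->
  (1 <= dn)%N ->
  ((2 * t0 - 2) * (s.-1)%:R * t1 + 2 * t0 < dn.+1%:R)%R ->
  strongly_degenerate dn%:Z e.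
Proof.
move=> s2 [irrE symEe] free T0 T1 t0ge t01 dn1 fl.
move=> S E' [symE subE] Sne.
case: (boolP [exists v, removable dn%:Z S E' v]) => [/existsP//|/existsPn nrem].
exfalso.
set B := [set w in S | (dn < deg S E' w)%N].
set Sm := S :\: B.
set big := fun v => [set w in B | E' v w].
have BS : B \subset S by apply/subsetP => w; rewrite inE => /andP[].
have big2 : forall v, v \in Sm -> (1 < #|big v|)%N.
  move=> v; rewrite inE => /andP [vB vS].
  have := nrem v; rewrite /removable vS lez_nat.
  have -> : (deg S E' v <= dn)%N by move: vB; rewrite /B inE vS /= -leqNgt.
  rewrite /= -ltnNge.
  suff -> : [set w in S | E' v w & (dn%:Z < (deg S E' w)%:Z)%R] = big v by [].
  apply/setP => w; rewrite !inE ltz_nat; by case: (w \in S); case: (E' v w); case: (dn < _)%N.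
have nBpos : (0 < #|B|)%N.
  rewrite lt0n; apply/negP => /eqP /cards0_eq B0.
  case/set0Pn: Sne => v vS.
  have vSm : v \in Sm by rewrite /Sm B0 !inE vS.
  have := big2 v vSm.
  suff -> : big v = set0 by rewrite cards0.
  by apply/setP => w; rewrite /big B0 !inE.
have cardS : #|S| = (#|B| + #|Sm|)%N.
  by rewrite -(cardsID B S) (setIidPr BS).
pose R0 := fun x y => E' x y && ((x \in B) || (y \in B)).
pose eH0 := fun u v : {x : T | x \in S} => R0 (val u) (val v).
have cU0 : #|{: {x : T | x \in S}}| = #|S| by rewrite card_sig; apply: eq_card => x; rewrite inE.
have sim0 : simple_graph eH0.
  split.
    move=> u; rewrite /eH0 /R0; apply/negP => /andP [/subE [_ _ h] _].
    by rewrite irrE in h.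
  by move=> u v; rewrite /eH0 /R0 symE orbC.
have min0 : shallow_top_minor 0 e eH0.
  exists val, (fun _ _ => [::]); split => //.
  - exact: val_inj.
  - move=> u v /andP [/subE [_ _ euv] _]; split => //=.
      by rewrite euv.
    rewrite inE andbT; apply/negP => /eqP h.
    have uv : u = v := val_inj h.
    by rewrite uv irrE in euv.
have h0 := density_le T0 sim0 (ltac:(rewrite cU0 cardS; exact: ltn_addr nBpos)) min0.
have h0' := pairs_sig S R0.
rewrite (card_pairs (fun x y => [&& x \in S, y \in S & R0 x y])) in h0'.
have h0'' : (#|B| * dn.+1 + #|Sm| * 2 <=
    \sum_x #|[set y | [&& x \in S, y \in S & R0 x y]]|)%N.
  rewrite -!sum_ind -big_split /=; apply: leq_sum => x _.
  case xB: (x \in B).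
    have xS : x \in S by apply: (subsetP BS).
    have -> : x \in Sm = false by rewrite inE xB.
    rewrite mul1n mul0n addn0.
    apply: (@leq_trans (deg S E' x)); first by move: xB; rewrite inE => /andP[].
    apply: subset_leq_card; apply/subsetP => y; rewrite !inE /R0 xB xS /=.
    by move=> /andP [-> ->].
  rewrite mul0n add0n.
  case xSm: (x \in Sm); last by rewrite mul0n.
  rewrite mul1n; apply: (leq_trans (big2 x xSm)).
  move: xSm; rewrite inE xB /= => xS.
  apply: subset_leq_card; apply/subsetP => y; rewrite /big inE => /andP [yB Exy].
  by rewrite inE xS /= (subsetP BS y yB) /R0 Exy yB orbT.
pose a := fun v => nth v (enum (big v)) 0.
pose b := fun v => nth v (enum (big v)) 1.
pose r := fun x : T => val (enum_rank x).
pose lo := fun v => if (r (a v) < r (b v))%N then a v else b v.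
pose hi := fun v => if (r (a v) < r (b v))%N then b v else a v.
have lohi : forall v, v \in Sm ->
    [/\ lo v \in big v, hi v \in big v & (r (lo v) < r (hi v))%N].
  move=> v vSm; have := big2 v vSm; rewrite cardE => sz.
  have aI : a v \in big v by rewrite -mem_enum /a mem_nth //; exact: ltnW sz.
  have bI : b v \in big v by rewrite -mem_enum /b mem_nth.
  have ab : a v != b v.
    by rewrite /a /b nth_uniq ?enum_uniq ?(ltnW sz).
  have rab : r (a v) != r (b v).
    apply: contra ab => /eqP h; apply/eqP; apply: enum_rank_inj; exact: val_inj h.
  rewrite /lo /hi; case: ifP => h; split => //.
  by rewrite ltn_neqAle eq_sym rab /= leqNgt h.
have bigP : forall v w, w \in big v -> [/\ w \in B, w \in S, E' v w & e w v].
  move=> v w; rewrite /big inE => /andP [wB Evw].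
  have [_ _ evw] := subE _ _ Evw.
  by split => //; [apply: (subsetP BS) | rewrite symEe].
have SmB : forall v, v \in Sm -> v \notin B by move=> v; rewrite inE => /andP[].
pose Q := fun x y v => (v \in Sm) && (((lo v == x) && (hi v == y)) || ((lo v == y) && (hi v == x))).
pose R1 := fun x y => [exists v, Q x y v].
pose m := fun x y => odflt x [pick v | Q x y v].
have Qs : forall x y, Q y x =1 Q x y by move=> x y v; rewrite /Q orbC.
have mP : forall x y, R1 x y -> [/\ m x y = m y x, Q x y (m x y) & x != y].
  move=> x y /existsP [w Qw]; rewrite /m (eq_pick (Qs x y)).
  case: pickP => [z Qz|/(_ w) h]; last by rewrite Qw in h.
  split => //; move: Qz; rewrite /Q => /andP [zSm H].
  have [_ _ rl] := lohi z zSm.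
  by case/orP: H => /andP [/eqP <- /eqP <-]; apply/eqP => h; rewrite h ltnn in rl.
have QB : forall x y v, Q x y v ->
    [/\ v \in Sm, x \in B, y \in B, E' v x & E' v y].
  move=> x y v /andP [vSm H]; have [l h _] := lohi v vSm.
  have [lB _ El _] := bigP _ _ l; have [hB _ Eh _] := bigP _ _ h.
  by case/orP: H => /andP [/eqP <- /eqP <-]; split.
pose eH1 := fun u v : {x : T | x \in B} => R1 (val u) (val v).
have cU1 : #|{: {x : T | x \in B}}| = #|B| by rewrite card_sig; apply: eq_card => x; rewrite inE.
have sim1 : simple_graph eH1.
  split.
    by move=> u; apply/negbTE/negP => h; have [_ _] := mP _ _ h; rewrite eqxx.
  move=> u v; rewrite /eH1 /R1; apply: eq_existsb => w; exact: Qs.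
have min1 : shallow_top_minor 1 e eH1.
  exists val, (fun u v => [:: m (val u) (val v)]); split => //.
  - exact: val_inj.
  - by move=> u v h; have [-> _ _] := mP _ _ h.
  - move=> u v h; have [_ /QB [wSm uB vB Eu Ev] uv] := mP _ _ h; split => //=.
    + have [_ _ e1] := subE _ _ Eu; have [_ _ e2] := subE _ _ Ev.
      by rewrite -symEe e1 e2.
    + rewrite !inE negb_or uv andbT; apply/andP; split.
        by apply: contraNneq (SmB _ wSm) => <-.
      by rewrite andbT; apply: contraNneq (SmB _ wSm) => ->.
    + move=> x w'; rewrite inE => /eqP ->.
      by apply: contraNneq (SmB _ wSm) => ->; apply: valP.
  - move=> u v u' v' x hh hh'; have [_ Q1 _] := mP _ _ hh; have [_ Q2 _] := mP _ _ hh'.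
    rewrite !inE => /eqP h1 /eqP h2.
    move: Q1 Q2; rewrite -h1 -h2 /Q => /andP [_ H1] /andP [_ H2].
    case/orP: H1 => /andP [/eqP l1 /eqP r1]; case/orP: H2 => /andP [/eqP l2 /eqP r2].
    + by left; split; apply: val_inj; apply: etrans (esym _) _; eassumption.
    + by right; split; apply: val_inj; apply: etrans (esym _) _; eassumption.
    + by right; split; apply: val_inj; apply: etrans (esym _) _; eassumption.
    + by left; split; apply: val_inj; apply: etrans (esym _) _; eassumption.
have h1 := density_le T1 sim1 (ltac:(by rewrite cU1)) min1.
have h1' := pairs_sig B R1.
pose f := fun v => (lo v, hi v).
pose A := [set f v | v in Sm].
pose Ar := [set (p.2, p.1) | p in A].
have cAr : #|Ar| = #|A|.
  by apply: card_imset => [[x1 y1] [x2 y2]] [-> ->].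
have Arank : forall p, p \in A -> (r p.1 < r p.2)%N.
  by move=> p /imsetP [v vSm ->]; have [_ _] := lohi v vSm.
have disj : [disjoint A & Ar].
  rewrite disjoints_subset; apply/subsetP => p pA; rewrite inE; apply/negP => /imsetP [q qA ep].
  move: (Arank _ pA) (Arank _ qA); rewrite ep /= => k1 k2.
  by rewrite ltnNge (ltnW k2) in k1.
have cU : #|A :|: Ar| = (#|A| + #|Ar|)%N.
  by apply/eqP; rewrite (leq_card_setU A Ar).2.
have sub1 : A :|: Ar \subset [set p : T * T | [&& p.1 \in B, p.2 \in B & R1 p.1 p.2]].
  have key : forall v, v \in Sm -> [/\ lo v \in B, hi v \in B, R1 (lo v) (hi v) & R1 (hi v) (lo v)].
    move=> v vSm; have [l h _] := lohi v vSm; have [lB _ _ _] := bigP _ _ l; have [hB _ _ _] := bigP _ _ h.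
    by split => //; apply/existsP; exists v; rewrite /Q vSm !eqxx ?orbT.
  apply/subsetP => p /setUP [] /imsetP [q qA ->].
    by have [? ? ? ?] := key q qA; rewrite inE /=; apply/and3P.
  move: qA => /imsetP [v vSm ->].
  by have [? ? ? ?] := key v vSm; rewrite inE /=; apply/and3P.
have hA : (2 * #|A| <= #|[set p : {x | x \in B} * {x | x \in B} | R1 (val p.1) (val p.2)]|)%N.
  apply: leq_trans h1'; apply: leq_trans (subset_leq_card sub1); by rewrite cU cAr addnn mul2n.
have hfib : (#|Sm| <= #|A| * s.-1)%N.
  rewrite -sum1_card (partition_big f (mem A)); last by move=> v vSm; apply: imset_f.
  rewrite -sum_nat_const; apply: leq_sum => p pA.
  rewrite sum1dep_card; rewrite leqNgt; apply/negP => big_s.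
  have hs : (s <= #|[set x in Sm | f x == p]|)%N by move: big_s; case: (s) s2 => //. 
  have [C [sC cC]] := sub_card hs.
  apply: free; exists p.1, p.2, C.
  have [v vSm pv] := imsetP pA.
  have [l h rl] := lohi v vSm; have [lB _ _ _] := bigP _ _ l; have [hB _ _ _] := bigP _ _ h.
  have CSm : forall c, c \in C -> c \in Sm /\ f c = p.
    by move=> c /(subsetP sC); rewrite inE => /andP [? /eqP].
  split => //.
  - by rewrite pv /=; apply/eqP => ee; rewrite ee ltnn in rl.
  - by apply/negP => /CSm [/SmB]; rewrite pv /= lB.
  - by apply/negP => /CSm [/SmB]; rewrite pv /= hB.
  - move=> c /CSm [cSm <-] /=.
    have [l' h' _] := lohi c cSm.
    have [_ _ _ e1] := bigP _ _ l'; have [_ _ _ e2] := bigP _ _ h'.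
    by rewrite e1 e2.
rewrite cU0 cardS in h0; rewrite cU1 in h1.
have e0 : (((#|B| * dn.+1 + #|Sm| * 2)%N)%:R <= t0 * (2 * (#|B| + #|Sm|))%:R :> rat)%R.
  by apply: le_trans h0; rewrite ler_nat; apply: leq_trans h0'' h0'.
have e1 : (((2 * #|A|)%N)%:R <= t1 * (2 * #|B|)%:R :> rat)%R.
  by apply: le_trans h1; rewrite ler_nat.
have e2 : (#|Sm|%:R <= #|A|%:R * (s.-1)%:R :> rat)%R by rewrite -natrM ler_nat.
rewrite !natrD !natrM -[dn.+1%:R%R]natr1 in e0 e1.
move: e0 e1 e2 fl; rewrite -[dn.+1%:R%R]natr1.
move: (#|B|%:R%R) (#|Sm|%:R%R) (#|A|%:R%R) (dn%:R%R) (s.-1%:R%R) (ltac:(rewrite ler1n; exact nBpos) : (1 <= #|B|%:R :> rat)%R)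
  (ltac:(rewrite ler1n; exact dn1) : (1 <= dn%:R :> rat)%R) (ltac:(rewrite ler1n -subn1 subn_gt0; exact: s2) : (1 <= (s.-1)%:R :> rat)%R)
  (ler0n rat #|Sm|) (ler0n rat #|A|).
move=> nb ns na D S1 nb1 D1 S11 ns0 na0 e0 e1 e2 fl'.
apply: (final_arith nb1 D1 ns0 na0 S11 t0ge t01 _ _ e2 fl'); [clear -e0; lra | clear -e1; lra].
Qed.


Unset Implicit Arguments.
Set Strict Implicit.
Theorem proposition3p1 (s : nat) (T : finType) (e : rel T) (t0 t1 : rat)
    (d : int) :
  (2 <= s)%N -> simple_graph e -> K2s_free s e ->
  tnabla_is 0 e t0 -> tnabla_is 1 e t1 ->
  d = Num.floor (((2 * t0 - 2) * (s.-1)%:R * t1 + 2 * t0)%R) ->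
  (1 <= d)%R ->
  [/\ strongly_degenerate d e,
      (d%:~R < 2 * s%:R * t0 * t1)%R &
      (2 * s%:R * t0 * t1 <= 2 * s%:R * t1 ^+ 2)%R].
Proof.
move=> s2 sG free T0 T1 hd d1.
have [t01 t0pos c2 c3] := arith0 s2 T0 T1 hd d1.
split => //.
case: d hd d1 {c2} => [dn|dn] hd d1; last by [].
apply: (@degen s T e t0 t1 dn s2 sG free T0 T1 (ltW t0pos) t01).
- by rewrite lez_nat in d1.
- have : (Num.floor ((2 * t0 - 2) * (s.-1)%:R * t1 + 2 * t0) < (dn.+1)%:Z)%R.
    by rewrite -hd ltz_nat.
  by rewrite floor_lt_int.
Qed.
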